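(* Let $m\ge2$ and let $p\in S_m$ be indecomposable and avoid the pattern $321$. Let $\lambda$ be the number of left-to-right maxima of $p$ (i.e. the number of indices $j$ such that $p_i<p_j$ for all $i<j$). Let $n\ge2$ and let $\omega\in\widetilde{S}_n$ avoid $p$. Then $\left\lfloor |\omega_\beta-\omega_\alpha|/n\right\rfloor\le m^{\lambda+1}+1$ for all $1\le\alpha<\beta\le n$, and consequently $\ell(\omega)\le\left(m^{\lambda+1}+2\right)\binom{n}{2}$.
   Context: For $n\ge 2$, the affine symmetric group $\widetilde{S}_n$ is the set of bijections $\omega:\mathbb{Z}\to\mathbb{Z}$ such that $\omega(i+n)=\omega(i)+n$ for all $i\in\mathbb{Z}$ and $\sum_{i=1}^n\omega(i)=\binom{n+1}{2}$; write $\omega_i=\omega(i)$. The length $\ell(\omega)$ is the number of pairs $(i,j)$ of integers with $1\le i\le n$, $i<j$, and $\omega_i>\omega_j$. For $p\in S_k$, $\omega$ contains $p$ if there exist integers $i_1<\cdots<i_k$ such that $\omega_{i_1}\cdots\omega_{i_k}$ has the same relative order as $p_1\cdots p_k$; otherwise $\omega$ avoids $p$. A permutation $p\in S_m$ is decomposable if there exists $1\le j\le m-1$ with $\{p_1,\dots,p_j\}=\{1,\dots,j\}$, and indecomposable otherwise. *)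

(* Defs.v *)
From HB Require Import structures.
From mathcomp Require Import all_boot all_order all_algebra perm.
Set Implicit Arguments. Unset Strict Implicit. Unset Printing Implicit Defensive.
Import Order.TTheory GRing.Theory Num.Theory.

Definition affine_perm (n : nat) (w : int -> int) : Prop :=
  [/\ bijective w,
      (forall i : int, w (i + (Posz n))%R = (w i + (Posz n))%R) &
      (\sum_(1 <= i < n.+1) w (Posz i))%R = (Posz 'C(n.+1, 2))].

(* w contains the pattern p : 'S_k  (positions and values of p are 0-indexed,
   which does not affect relative order). *)
Definition aff_contains (k : nat) (p : 'S_k) (w : int -> int) : Prop :=
  exists f : 'I_k -> int,
    (forall a b : 'I_k, (a < b)%N -> (f a < f b)%R) /\
    (forall a b : 'I_k, (w (f a) < w (f b))%R = (p a < p b)%N).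

Definition aff_avoids (k : nat) (p : 'S_k) (w : int -> int) : Prop :=
  ~ aff_contains p w.

Definition avoids321 (m : nat) (p : 'S_m) : Prop :=
  ~ exists i j k : 'I_m,
      [/\ (i < j)%N, (j < k)%N, (p j < p i)%N & (p k < p j)%N].

(* decomposable: exists 1 <= j <= m-1 with {p_1..p_j} = {1..j}
   (0-indexed: positions and values < j) *)
Definition decomposable (m : nat) (p : 'S_m) : Prop :=
  exists j : nat, [/\ (0 < j)%N, (j < m)%N &
    [set p i | i in [set i : 'I_m | (i < j)%N]] = [set v : 'I_m | (v < j)%N]].

Definition indecomposable (m : nat) (p : 'S_m) : Prop := ~ decomposable p.

Definition ltr_maxima (m : nat) (p : 'S_m) : nat :=
  #|[set j : 'I_m | [forall i : 'I_m, (i < j)%N ==> (p i < p j)%N]]|.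

(* Inversions (i,j) with 1 <= i <= n, i < j <= N; since j > i >= 1, j ranges
   over positive integers. The length l(w) is the number of all such pairs
   with no upper bound on j, i.e. the supremum over N of this count. *)
Definition inv_upto (n : nat) (w : int -> int) (N : nat) : nat :=
  \sum_(1 <= i < n.+1) \sum_(i.+1 <= j < N.+1) ((w (Posz j)) < (w (Posz i)))%R.

Definition length_le (n : nat) (w : int -> int) (K : nat) : Prop :=
  forall N : nat, (inv_upto n w N <= K)%N.

(* Main.v *)
Require Import Defs.
From HB Require Import structures.
From mathcomp Require Import all_boot all_order all_algebra perm.
Import Order.TTheory GRing.Theory Num.Theory.
From Stdlib Require Import Lia.

Ltac tonia := intros; repeat match goal with
 | H : is_true (leq _ _) |- _ => apply (elimT ssrnat.leP) in H
 end; (try apply/ssrnat.leP); change addn with Nat.add in *; change muln with Nat.mul in *; change subn with Nat.sub in *; nia.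
Ltac tolia := intros; repeat match goal with
 | H : is_true (leq _ _) |- _ => apply (elimT ssrnat.leP) in H
 end; (try apply/ssrnat.leP); change addn with Nat.add in *; change muln with Nat.mul in *; change subn with Nat.sub in *; lia.

Definition upper (q : nat -> nat) (i : nat) : bool := all (fun j => q j < q i) (iota 0 i).
Definition Ucnt (m : nat) (q : nat -> nat) (i : nat) : nat := count (upper q) (iota i.+1 (m - i.+1)).
Definition Gup (m : nat) (q : nat -> nat) (i : nat) : nat := (m + 2) * 2 ^ (Ucnt m q i).
Definition step (m : nat) (q : nat -> nat) (D : nat) (s : seq nat) (i : nat) : nat :=
  if upper q i then last 0 s + Gup m q i
  else maxn (last 0 s).+1 (\max_(u < i | upper q u && (q u < q i)) (nth 0 s u + D + 1)).
Fixpoint tseq (m : nat) (q : nat -> nat) (D : nat) (i : nat) : seq nat :=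
  if i is i'.+1 then rcons (tseq m q D i') (step m q D (tseq m q D i') i') else [::].
Definition tm m q D i := last 0 (tseq m q D i.+1).

Lemma size_tseq m q D i : size (tseq m q D i) = i.
Proof. by elim: i => //= i IH; rewrite size_rcons IH. Qed.

Lemma nth_tseq m q D i u : u < i -> nth 0 (tseq m q D i) u = tm m q D u.
Proof.
elim: i => // i IH; rewrite ltnS leq_eqVlt => /orP[/eqP->|lt].
  by rewrite /tm /= nth_rcons size_tseq ltnn eqxx last_rcons.
by rewrite /= nth_rcons size_tseq lt IH.
Qed.

Lemma last_tseq m q D i : last 0 (tseq m q D i) = if i is i'.+1 then tm m q D i' else 0.
Proof. by case: i. Qed.

Lemma tm_rec m q D i : tm m q D i =
  if upper q i then (if i is i'.+1 then tm m q D i' else 0) + Gup m q i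
  else maxn (if i is i'.+1 then tm m q D i' else 0).+1
         (\max_(u < i | upper q u && (q u < q i)) (tm m q D u + D + 1)).
Proof.
rewrite /tm /= last_rcons /step last_tseq; case: ifP => // _.
congr maxn; apply: eq_bigr => u _; by rewrite nth_tseq.
Qed.

Lemma Gup_gt m q i : m + 2 <= Gup m q i.
Proof. by rewrite /Gup -{1}(muln1 (m+2)) leq_mul2l expn_gt0 orbT. Qed.

Lemma tm_S m q D i : tm m q D i < tm m q D i.+1.
Proof.
rewrite [tm _ _ _ i.+1]tm_rec; case: ifP => _.
  by rewrite -addn1 leq_add2l (leq_trans _ (Gup_gt _ _ _)) // addn2.
by rewrite leq_max leqnn.
Qed.

Lemma tm_mono m q D i j : i < j -> tm m q D i < tm m q D j.
Proof.
elim: j => // j IH; rewrite ltnS leq_eqVlt => /orP[/eqP->|lt]; first exact: tm_S.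
exact: ltn_trans (IH lt) (tm_S _ _ _ _).
Qed.

Lemma tm_le m q D i j : i <= j -> tm m q D i <= tm m q D j.
Proof. by rewrite leq_eqVlt => /orP[/eqP->//|/(tm_mono m q D)/ltnW]. Qed.


Lemma upper_lt q i j : upper q j -> i < j -> q i < q j.
Proof. by move=> /allP H lt; apply: H; rewrite mem_iota. Qed.

Lemma lower_lt m q i j :
  (forall a b, a < m -> b < m -> q a = q b -> a = b) ->
  (forall a b c, a < b -> b < c -> c < m -> ~ (q b < q a /\ q c < q b)) ->
  ~~ upper q i -> i < j -> j < m -> q i < q j.
Proof.
move=> inj H321 /allPn [k]; rewrite mem_iota add0n => /andP[_ ki]; rewrite -leqNgt => qik ij jm.
have im : i < m by apply: ltn_trans jm.
have km : k < m by apply: ltn_trans im.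
have qik' : q i < q k.
  rewrite ltn_neqAle qik andbT; apply/eqP => /(inj _ _ im km) E.
  by rewrite E ltnn in ki.
case: (ltngtP (q i) (q j)) => // [lt|E].
  by case: (H321 k i j ki ij jm).
by move: (inj _ _ im jm E) => E'; rewrite E' ltnn in ij.
Qed.

Lemma Ucnt_S m q i : i.+1 < m -> Ucnt m q i = upper q i.+1 + Ucnt m q i.+1.
Proof.
move=> lt; rewrite /Ucnt; have -> : m - i.+1 = (m - i.+2).+1 by rewrite subnSK.
by [].
Qed.

Lemma Ucnt_0 m q i : m <= i.+1 -> Ucnt m q i = 0.
Proof. by move=> le; rewrite /Ucnt (eqP le). Qed.

Lemma Ucnt_mono m q i j : i <= j -> Ucnt m q j <= Ucnt m q i.
Proof.
elim: j => [|j IH]; first by rewrite leqn0 => /eqP->.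
rewrite leq_eqVlt => /orP[/eqP->//|]; rewrite ltnS => /IH; apply: leq_trans.
case: (ltnP j.+1 m) => [lt|le]; first by rewrite (Ucnt_S m q j lt) leq_addl.
by rewrite (@Ucnt_0 _ _ j.+1) // (leq_trans le).
Qed.

Lemma tm_before_upper m q D u y : upper q y -> u < y -> tm m q D u + Gup m q y <= tm m q D y.
Proof.
move=> uy; case: y uy => // y uy uy'.
rewrite [tm _ _ _ y.+1]tm_rec uy leq_add2r; apply: tm_le; by rewrite -ltnS.
Qed.

Lemma bigmax_addc n (P : pred 'I_n) (F : 'I_n -> nat) c R :
  c <= R -> (forall i, P i -> F i + c <= R) -> \max_(i | P i) F i + c <= R.
Proof.
move=> cR H; rewrite addnC -leq_subRL //; apply/bigmax_leqP => i Pi.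
by rewrite leq_subRL // addnC H.
Qed.

Lemma KL m q D y z :
  upper q y -> Gup m q y <= D + 1 -> y <= z -> z < m ->
  (forall w, y < w -> w <= z -> ~~ upper q w -> q w < q y) ->
  tm m q D z + Gup m q z <= tm m q D y + D + 1 + (z - y).
Proof.
move=> uy Gy; elim: z => [|z IH].
  rewrite leqn0 => /eqP E _ _; subst y; by rewrite subnn addn0 -addnA leq_add2l.
rewrite leq_eqVlt => /orP[/eqP<- _ _|]; first by rewrite subnn addn0 -addnA leq_add2l.
rewrite ltnS => yz zm Hw.
have IH' := IH yz (ltn_trans (ltnSn z) zm) (fun w a b => Hw w a (leq_trans b (leqnSn z))).
have ->: z.+1 - y = (z - y).+1 by rewrite subSn.
rewrite [tm _ _ _ z.+1]tm_rec; case: ifP => uz.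
  move: (Ucnt_S m q z zm); rewrite uz add1n => HU.
  have E : Gup m q z.+1 + Gup m q z.+1 = Gup m q z by rewrite /Gup HU expnS mulnCA mul2n addnn.
  by rewrite -addnA E; apply: (leq_trans IH'); rewrite leq_add2l leqnSn.
have HU : Ucnt m q z = Ucnt m q z.+1 by rewrite (Ucnt_S m q z zm) uz.
have GE : Gup m q z.+1 = Gup m q z by rewrite /Gup HU.
rewrite GE.
have qzy : q z.+1 < q y by apply: Hw => //; rewrite uz.
have first : (tm m q D z).+1 + Gup m q z <= tm m q D y + D + 1 + (z - y).+1.
  by rewrite addSn addnS ltnS.
rewrite addn_maxl geq_max first /=.
apply: bigmax_addc; first by apply: leq_trans first; rewrite leq_addl.
move=> u /andP[uu quz].
have uy' : u < y.
  case: (ltngtP u y) => // [yu|E].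
    have := upper_lt q y u uu yu; move=> qyu; have := ltn_trans qyu quz.
    by rewrite ltnNge (ltnW qzy).
  by move: quz; rewrite E ltnNge (ltnW qzy).
have := tm_before_upper m q D u y uy uy'.
have GyGz : Gup m q z <= Gup m q y by rewrite /Gup leq_mul2l leq_exp2l // Ucnt_mono ?orbT.
move=> H1; have := leq_trans (leq_add (leqnn (tm m q D u)) GyGz) H1.
move=> HH; clear -HH; tolia.
Qed.


Lemma bigmax_lt n (P : pred 'I_n) (F : 'I_n -> nat) c :
  0 < c -> (forall i, P i -> F i < c) -> \max_(i | P i) F i < c.
Proof. by move=> c0 H; elim/big_ind: _ => // a b; rewrite gtn_max => -> ->. Qed.

Lemma upper_before q y x u :
  upper q y -> upper q u -> q x < q y -> q u < q x -> u < y.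
Proof.
move=> uy uu qxy qux; case: (ltngtP u y) => // [yu|E].
  have := upper_lt q y u uu yu => qyu.
  by have := ltn_trans (ltn_trans qyu qux) qxy; rewrite ltnn.
by move: qux; rewrite E => /(ltn_trans qxy); rewrite ltnn.
Qed.

Lemma C1 m q D y x :
  (forall a b, a < m -> b < m -> q a = q b -> a = b) ->
  (forall a b c, a < b -> b < c -> c < m -> ~ (q b < q a /\ q c < q b)) ->
  upper q y -> Gup m q y <= D + 1 -> y < x -> x < m -> ~~ upper q x -> q x < q y ->
  tm m q D x < tm m q D y + D.
Proof.
move=> inj H321 uy Gy yx xm lx qxy.
case: x yx xm lx qxy => // x yx xm lx qxy.
rewrite [tm _ _ _ x.+1]tm_rec (negbTE lx) gtn_max; apply/andP; split.
  have := KL m q D y x uy Gy yx (ltn_trans (ltnSn x) xm).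
  have Hw : forall w, y < w -> w <= x -> ~~ upper q w -> q w < q y.
    move=> w yw wx lw; apply: ltn_trans qxy.
    exact: (lower_lt m q w x.+1 inj H321 lw).
  move=> /(_ Hw) H; have G := Gup_gt m q x.
  have : x - y <= x by apply: leq_subr.
  move=> HH; tolia.
apply: bigmax_lt => [|u /andP[uu qux]].
  have := Gup_gt m q y; tolia.
have uy' := upper_before q y x.+1 u uy uu qxy qux.
have := tm_before_upper m q D u y uy uy'.
have := Gup_gt m q y; tolia.
Qed.

Lemma C2 m q D x y : upper q x -> x < y -> ~~ upper q y -> q x < q y ->
  tm m q D x + D + 1 <= tm m q D y.
Proof.
move=> ux xy ly qxy; case: y xy ly qxy => // y xy ly qxy.
rewrite [tm _ _ _ y.+1]tm_rec (negbTE ly) leq_max; apply/orP; right.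
exact: (@leq_bigmax_cond _ (fun u : 'I_y.+1 => upper q u && (q u < q y.+1))
   (fun u : 'I_y.+1 => tm m q D u + D + 1) (Ordinal xy) (introT andP (conj ux qxy))).
Qed.


Definition qof (m : nat) (p : 'S_m) (i : nat) : nat :=
  odflt 0 (omap (fun x : 'I_m => val (p x)) (insub i)).

Arguments qof {m}.

Lemma qof_ord m (p : 'S_m) (x : 'I_m) : qof p x = p x.
Proof. by rewrite /qof valK. Qed.

Lemma qof_inj m (p : 'S_m) a b : a < m -> b < m -> qof p a = qof p b -> a = b.
Proof.
move=> am bm; rewrite -[a]/(val (Ordinal am)) -[b]/(val (Ordinal bm)) !qof_ord.
by move=> /val_inj /perm_inj ->.
Qed.

Lemma qof_321 m (p : 'S_m) : avoids321 p ->
  forall a b c, a < b -> b < c -> c < m -> ~ (qof p b < qof p a /\ qof p c < qof p b).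
Proof.
move=> H a b c ab bc cm [h1 h2]; apply: H.
have bm : b < m by apply: ltn_trans cm.
have am : a < m by apply: ltn_trans bm.
exists (Ordinal am), (Ordinal bm), (Ordinal cm); split => //.
  by move: h1; rewrite -[a]/(val (Ordinal am)) -[b]/(val (Ordinal bm)) !qof_ord.
by move: h2; rewrite -[c]/(val (Ordinal cm)) -[b]/(val (Ordinal bm)) !qof_ord.
Qed.

Lemma wper (n : nat) (w : int -> int) : (forall i : int, w (i + Posz n)%R = (w i + Posz n)%R) ->
  forall (i : int) (t : nat), w (i + Posz (t * n))%R = (w i + Posz (t * n))%R.
Proof.
move=> H i; elim=> [|t IH]; first by rewrite mul0n !addr0.
by rewrite mulSn PoszD [(Posz n + _)%R]addrC addrA H IH -addrA.
Qed.


Lemma embed m (p : 'S_m) n (w : int -> int) (L : int) (D r d : nat) :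
  avoids321 p -> (forall i : int, w (i + Posz n)%R = (w i + Posz n)%R) ->
  0 < d -> d < n -> r < n ->
  w (L + Posz d)%R = (w L + Posz (D * n + r))%R ->
  (forall y, y < m -> upper (qof p) y -> Gup m (qof p) y <= D + 1) ->
  aff_contains p w.
Proof.
move=> Hav Hper d0 dn rn wU HG.
set q := qof p.
have inj := qof_inj m p; have H321 := qof_321 m p Hav.

pose pN (x : nat) := if upper q x then d + tm m q D x * n else tm m q D x * n.
pose vN (x : nat) := if upper q x then D * n + r + tm m q D x * n else tm m q D x * n.
have wf : forall x : nat, w (L + Posz (pN x))%R = (w L + Posz (vN x))%R.
  move=> x; rewrite /pN /vN; case: ifP => _; last by rewrite wper.
  by rewrite PoszD addrA wper // wU -addrA -PoszD.
have n0 : 0 < n by apply: leq_trans dn.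
have Tm : forall a b, a < b -> tm m q D a < tm m q D b by move=> a b; apply: tm_mono.
exists (fun x : 'I_m => (L + Posz (pN x))%R); split.
  move=> a b ab; rewrite ltrD2l ltz_nat /pN.
  have := Tm _ _ ab.
  case: ifP => _; case: ifP => _; tonia.
have VL : forall a b : 'I_m, p a < p b -> vN a < vN b.
  move=> a b; rewrite -!qof_ord -/q => qab.
  have am := ltn_ord a; have bm := ltn_ord b.
  rewrite /vN; case: ifP => ua; case: ifP => ub.
  - have ab : (a < b)%N.
      case: (ltngtP a b) => // [ba|E]; last by move: qab; rewrite E ltnn.
      by have := upper_lt q b a ua ba; rewrite ltnNge (ltnW qab).
    have := Tm _ _ ab; tonia.
  - have ab : (a < b)%N.
      case: (ltngtP a b) => // [ba|E]; last by move: ua ub; rewrite E => ->.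
      by have := upper_lt q b a ua ba; rewrite ltnNge (ltnW qab).
    have H := C2 m q D a b ua ab (negbT ub) qab; have := leq_mul H (leqnn n); tonia.
  - have : tm m q D a < tm m q D b + D.
      case: (ltngtP a b) => [ab|ba|E]; last by move: ua ub; rewrite E => ->.
        by apply: ltn_addr; apply: Tm.
      exact: (C1 m q D b a inj H321 ub (HG b bm ub) ba am (negbT ua) qab).
    tonia.
  - have ab : (a < b)%N.
      case: (ltngtP a b) => // [ba|E]; last by move: qab; rewrite E ltnn.
      by have := lower_lt m q b a inj H321 (negbT ub) ba am; rewrite ltnNge (ltnW qab).
    have := Tm _ _ ab; tonia.
move=> a b; rewrite !wf ltrD2l ltz_nat.
case: (ltngtP (p a) (p b)) => [/VL -> //|/VL ba|E].
  by rewrite ltnNge (ltnW ba).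
have -> : a = b by apply: (@perm_inj _ p); apply: val_inj; exact: E.
by rewrite ltnn.
Qed.


Lemma ltr_count m (p : 'S_m) : ltr_maxima p = count (upper (qof p)) (iota 0 m).
Proof.
rewrite /ltr_maxima -val_enum_ord count_map.
have -> : #|[set j : 'I_m | [forall i : 'I_m, (i < j) ==> (p i < p j)]]| =
          #|[pred j : 'I_m | upper (qof p) j]|.
  apply: eq_card => j; rewrite inE /= /upper; apply/forallP/allP.
    move=> H k; rewrite mem_iota add0n => /andP[_ kj].
    have km : k < m by apply: ltn_trans (ltn_ord j).
    have := H (Ordinal km); rewrite /= kj /= => lt.
    by rewrite -[k]/(val (Ordinal km)) !qof_ord.
  move=> H i; apply/implyP => ij.
  by have := H i; rewrite mem_iota add0n ij !qof_ord => ->.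
rewrite cardE size_filter -enumT; exact: eq_count.
Qed.

Lemma iota_split y m : y < m -> iota 0 m = iota 0 y ++ y :: iota y.+1 (m - y.+1).
Proof.
move=> ym; have E : m = y + (m - y) by rewrite subnKC // ltnW.
rewrite {1}E iotaD add0n; congr (_ ++ _).
by rewrite -subnSK // addKn.
Qed.

Lemma Gup_bound m (p : 'S_m) D y : 2 <= m -> m * m ^ ltr_maxima p <= D -> y < m ->
  upper (qof p) y -> Gup m (qof p) y <= D + 1.
Proof.
move=> m2 hD ym uy.
set U := Ucnt m (qof p) y.
have HU : U.+1 <= ltr_maxima p.
  rewrite ltr_count /U /Ucnt.
  rewrite (iota_split y m ym) count_cat /= uy add1n.
  by apply: leq_trans (leq_addl _ _).
apply: leq_trans (leq_addr 1 D); apply: leq_trans hD.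
rewrite /Gup -/U.
have h1 : 2 ^ U.+1 <= m ^ ltr_maxima p.
  apply: leq_trans (leq_pexp2l _ HU) _; first by [].
  by rewrite leq_exp2r // (leq_trans _ HU).
apply: leq_trans (leq_mul (leqnn m) h1).
rewrite expnS mulnA; apply: leq_mul (leqnn _).
by rewrite muln2 -addnn leq_add2l.
Qed.


Lemma part1_core m (p : 'S_m) n (w : int -> int) (a b X : nat) :
  (2 <= m)%N -> avoids321 p -> (2 <= n)%N ->
  (forall i : int, w (i + Posz n)%R = (w i + Posz n)%R) -> 
  (1 <= a)%N -> (a < b)%N -> (b <= n)%N ->
  (Posz X = w (Posz b) - w (Posz a) \/ Posz X = w (Posz a) - w (Posz b))%R ->
  m * m ^ ltr_maxima p <= X %/ n -> aff_contains p w.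
Proof.
move=> m2 Hav n2 Hper a1 ab bn XZ hD.
have n0 : 0 < n by apply: leq_trans n2.
have XE : X = X %/ n * n + X %% n := divn_eq X n.
have rn : X %% n < n := ltn_pmod X n0.
move: XE rn hD; move: (X %/ n) (X %% n) => Dq r XE rn hD.
case: XZ => XZ.
  apply: (@embed m p n w (Posz a) Dq r (b - a) Hav Hper).
  - clear -ab; tolia.
  - clear -ab bn a1; tolia.
  - exact: rn.
  - have E1 : (Posz a + Posz (b - a))%R = Posz b by rewrite -PoszD subnKC // ltnW.
    by rewrite E1 -XE XZ [RHS]addrC subrK.
  - by move=> y ym uy; apply: Gup_bound.
apply: (@embed m p n w (Posz b - Posz n)%R Dq.+1 r (a + n - b) Hav Hper).
- clear -ab bn a1; tolia.
- clear -ab bn a1; tolia.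
- exact: rn.
- have E2 : (Posz b - Posz n + Posz (a + n - b))%R = Posz a.
    have h : (b <= a + n)%N by apply: leq_trans bn (leq_addl _ _).
    by rewrite -subzn // PoszD addrC addrA subrK addrK.
  have wL : w (Posz b - Posz n)%R = (w (Posz b) - Posz n)%R.
    by have := Hper (Posz b - Posz n)%R; rewrite subrK => ->; rewrite addrK.
  by rewrite E2 wL mulSn -addnA PoszD -XE XZ addrA subrK addrC subrK.
- move=> y ym uy; apply: leq_trans (Gup_bound _ _ _ _ m2 hD ym uy) _; by rewrite leq_add2r.
Qed.

Lemma part1 m (p : 'S_m) n (w : int -> int) :
  (2 <= m)%N -> avoids321 p -> (2 <= n)%N -> affine_perm n w -> aff_avoids p w ->
  (forall a b : nat, (1 <= a)%N -> (a < b)%N -> (b <= n)%N ->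
     (`|(w (Posz b) - w (Posz a))%R|%N %/ n <= m ^ (ltr_maxima p).+1 + 1)%N).
Proof.
move=> m2 Hav n2 [_ Hper _] Havoid a b a1 ab bn.
rewrite leqNgt; apply/negP => Hgt; apply: Havoid.
apply: (@part1_core m p n w a b `|(w (Posz b) - w (Posz a))%R|%N m2 Hav n2 Hper a1 ab bn).
  case: (lerP (w (Posz a)) (w (Posz b))) => hw; [left|right].
    by rewrite gez0_abs // subr_ge0.
  by rewrite distnC gez0_abs // subr_ge0 ltW.
move: Hgt; rewrite -expnS; move: (_ %/ n) => Y; clear; tolia.
Qed.


Lemma resid (G : nat -> nat) n T :
  \sum_(0 <= j < T * n) G j = \sum_(0 <= t < T) \sum_(0 <= b < n) G (t * n + b).
Proof.
elim: T => [|T IH]; first by rewrite mul0n !big_geq.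
rewrite mulSnr (@big_cat_nat _ _ _ (T * n)) ?leq_addr // IH big_nat_recr //=; congr (_ + _).
rewrite -{1}[T * n]add0n big_addn addKn; apply: eq_bigr => b _; by rewrite addnC.
Qed.

Lemma sum_widen (G : nat -> nat) a b : a <= b -> \sum_(0 <= j < a) G j <= \sum_(0 <= j < b) G j.
Proof. by move=> ab; rewrite [X in _ <= X](@big_cat_nat _ _ _ a) //= leq_addr. Qed.

Lemma stepA n (G : nat -> nat) N T : G 0 = 0 -> N <= T * n ->
  \sum_(0 <= j < N.+1) G j <= \sum_(0 <= b < n) \sum_(0 <= t < T) G (t * n + b.+1).
Proof.
move=> G0 NT; have H1 : N.+1 <= (T * n).+1 by [].
apply: leq_trans (sum_widen G _ _ H1) _.
rewrite big_nat_recl // G0 add0n (resid (fun j => G j.+1)) exchange_big_nat.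
by apply: leq_sum => b _; apply: leq_sum => t _; rewrite addnS.
Qed.

Lemma pairsum (H : nat -> nat -> nat) c n : (forall i, H i i = 0) ->
  (forall i j, i < j -> j < n -> H i j + H j i <= c) ->
  \sum_(0 <= i < n) \sum_(0 <= j < n) H i j <= c * 'C(n, 2).
Proof.
move=> H0; elim: n => [|n IH] Hp; first by rewrite big_geq.
rewrite big_nat_recr //= big_nat_recr //= H0 addn0.
under eq_bigr => i _ do rewrite big_nat_recr //=.
rewrite big_split /= binS bin1 mulnDr -addnA.
apply: leq_add; first by apply: IH => i j ij jn; apply: Hp => //; apply: ltn_trans jn _.
rewrite -big_split /=.
apply: leq_trans (_ : \sum_(0 <= i < n) c <= _).
  rewrite big_nat_cond [X in _ <= X]big_nat_cond; apply: leq_sum => i /andP[/andP[_ i_n] _]; exact: Hp.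
by rewrite sum_nat_const_nat subn0 mulnC.
Qed.



Lemma sum_trunc (P : pred nat) T k : (forall t, P t -> t < k) ->
  \sum_(0 <= t < T) (P t : nat) <= \sum_(0 <= t < k) (P t : nat).
Proof.
move=> Hk; case: (leqP T k) => Tk; first exact: sum_widen.
rewrite [X in X <= _](@big_cat_nat _ _ _ k); [|done|exact: ltnW].
rewrite [X in _ + X <= _]big_nat_cond [X in _ + X <= _]big1; first by rewrite addn0.
move=> t /andP[/andP[kt _] _]; case Pt: (P t) => //; move: (Hk _ Pt).
by rewrite ltnNge kt.
Qed.

Lemma sum_bool_le (P : pred nat) k : \sum_(0 <= t < k) (P t : nat) <= k.
Proof.
apply: leq_trans (_ : \sum_(0 <= t < k) 1 <= k).
  by apply: leq_sum => t _; case: (P t).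
by rewrite sum_nat_const_nat subn0 muln1.
Qed.

Lemma cnt1 (P : pred nat) T c : (forall t, P t -> t <= c) ->
  \sum_(0 <= t < T) (P t : nat) <= c.+1.
Proof. by move=> H; apply: leq_trans (@sum_trunc P T c.+1 H) (sum_bool_le _ _). Qed.

Lemma cnt2 (P : pred nat) T c : (forall t, P t -> 0 < t <= c) ->
  \sum_(0 <= t < T) (P t : nat) <= c.
Proof.
move=> H; apply: leq_trans (@sum_trunc P T c.+1 _) _.
  by move=> t /H /andP[_]; rewrite ltnS.
rewrite big_nat_recl //; have -> : P 0 = false by apply/negP => /H.
by rewrite add0n (sum_bool_le (fun t => P t.+1)).
Qed.


Definition hc (n : nat) (w : int -> int) (N i b : nat) : nat :=
  \sum_(0 <= t < N.+1) ((i < t * n + b)%N && (w (Posz (t * n + b)) < w (Posz i))%R).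

Lemma wsh n (w : int -> int) : (forall i : int, w (i + Posz n)%R = (w i + Posz n)%R) ->
  forall t k : nat, w (Posz (t * n + k)) = (w (Posz k) + Posz (t * n))%R.
Proof. by move=> Hp t k; rewrite addnC PoszD wper. Qed.

Lemma hc_diag n w N k : (forall i : int, w (i + Posz n)%R = (w i + Posz n)%R) -> hc n w N k k = 0.
Proof.
move=> Hp; rewrite /hc big1 // => t _.
by rewrite wsh // gtrDl ltz_nat andbF.
Qed.

Lemma hc_pair n w N c a b : 0 < n -> (forall i : int, w (i + Posz n)%R = (w i + Posz n)%R) ->
  (`|(w (Posz b) - w (Posz a))%R|%N %/ n <= c) -> a < b ->
  hc n w N a b + hc n w N b a <= c.+1.
Proof.
move=> n0 Hp PB ab.
set X := `|(w (Posz b) - w (Posz a))%R|%N in PB.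
case: (lerP (w (Posz a)) (w (Posz b))) => hw.
  have XZ : Posz X = (w (Posz b) - w (Posz a))%R by rewrite gez0_abs // subr_ge0.
  rewrite /hc big1 ?add0n => [|t _]; last first.
    by rewrite wsh // ltNge (le_trans hw) ?andbF // lerDl.
  apply: leq_trans (leqnSn c); apply: cnt2 => t /andP[bt].
  rewrite wsh // addrC -ltrBrDr -XZ ltz_nat => tX.
  apply/andP; split.
    by case: t bt tX => // ; rewrite mul0n add0n ltnNge ltnW.
  by apply: leq_trans PB; rewrite leq_divRL // ltnW.
have XZ : Posz X = (w (Posz a) - w (Posz b))%R.
  by rewrite /X distnC gez0_abs // subr_ge0 ltW.
rewrite [X in _ + X]/hc big1 ?addn0 => [|t _]; last first.
  by rewrite wsh // ltNge (le_trans (ltW hw)) ?andbF // lerDl.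
apply: cnt1 => t /andP[_].
rewrite wsh // addrC -ltrBrDr -XZ ltz_nat => tX.
by apply: leq_trans PB; rewrite leq_divRL // ltnW.
Qed.

Lemma part2 n (w : int -> int) c : 0 < n ->
  (forall i : int, w (i + Posz n)%R = (w i + Posz n)%R) ->
  (forall a b : nat, (1 <= a)%N -> (a < b)%N -> (b <= n)%N ->
     (`|(w (Posz b) - w (Posz a))%R|%N %/ n <= c)%N) ->
  length_le n w (c.+1 * 'C(n, 2)).
Proof.
move=> n0 Hp PB N; rewrite /inv_upto.
apply: leq_trans (_ : \sum_(1 <= i < n.+1) \sum_(0 <= b < n) hc n w N i b.+1 <= _).
  rewrite big_nat_cond [X in _ <= X]big_nat_cond; apply: leq_sum => i _.
  have E : \sum_(i.+1 <= j < N.+1) ((w (Posz j) < w (Posz i))%R : nat) =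
           \sum_(0 <= j < N.+1) (((i < j)%N && (w (Posz j) < w (Posz i))%R) : nat).
    rewrite (@big_nat_widenl _ _ _ i.+1 0) // big_mkcond /=.
    by apply: eq_bigr => j _; case: (i < j).
  rewrite E; apply: (stepA n (fun j => ((i < j)%N && (w (Posz j) < w (Posz i))%R) : nat) N N.+1) => //.
  by apply: leq_trans (leqnSn N) _; rewrite leq_pmulr.
rewrite big_add1 /=.
apply: pairsum => [i|i j ij jn]; first exact: hc_diag.
by apply: hc_pair => //; apply: PB.
Qed.


Theorem mainTheorem5 (m : nat) (p : 'S_m) (n : nat) (w : int -> int) :
  (2 <= m)%N -> indecomposable p -> avoids321 p ->
  (2 <= n)%N -> affine_perm n w -> aff_avoids p w ->
  (forall a b : nat, (1 <= a)%N -> (a < b)%N -> (b <= n)%N ->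
     (`|(w (Posz b) - w (Posz a))%R|%N %/ n <= m ^ (ltr_maxima p).+1 + 1)%N)
  /\ length_le n w ((m ^ (ltr_maxima p).+1 + 2) * 'C(n, 2)).
Proof.
move=> m2 _ Hav n2 Haff Havoid.
have P1 := part1 m p n w m2 Hav n2 Haff Havoid.
split => //.
have -> : m ^ (ltr_maxima p).+1 + 2 = (m ^ (ltr_maxima p).+1 + 1).+1 by rewrite addn2 addn1.
case: Haff => _ Hper _.
exact: part2 (leq_trans _ n2) Hper P1.
Qed.
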